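(* Let $0<\lambda<1$ and let $I_1\subset\mathbb{R}$ be an open interval containing $[-1,1]$. For every integer $n\ge1$ there exists $\delta(n)>0$ with $(n+1)\delta(n)<1-\lambda$ such that for every $C^1$ map $h:I_1\to\mathbb{R}$ with $\|h-\mathrm{id}\|_{1,I_1}<\delta(n)$ and $h(0)>0$ there exists an integer $k\ge1$ satisfying $$(n+1)|h(\lambda^k)-\lambda^k|>\lambda^k(1-\lambda),\qquad n|h(\lambda^k)-\lambda^k|<\lambda^{k-1}(1-\lambda),$$ and $$|(h(y)-y)-(h(\lambda^k)-\lambda^k)|<\tfrac14|h(\lambda^k)-\lambda^k|\quad\text{for every } y\in I_1 \text{ with } |y-\lambda^k|<\lambda^{k-1}(1-\lambda).$$
   Context: For an open set $J\subset\mathbb{R}$ and a $C^1$ map $u$ on $J$, $\|u\|_{1,J}=\sup_{x\in J}(|u(x)|+|u'(x)|)$. *)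

(* Defs.v *)
From Stdlib Require Import Reals Lra.
Open Scope R_scope.

Definition is_open_interval (I : R -> Prop) : Prop :=
  (forall x y z, I x -> I z -> x <= y -> y <= z -> I y) /\
  (forall x, I x -> exists e, 0 < e /\ forall y, Rabs (y - x) < e -> I y).

Definition C1_on (I : R -> Prop) (u u' : R -> R) : Prop :=
  (forall x, I x -> derivable_pt_lim u x (u' x)) /\
  (forall x, I x -> continuity_pt u' x).

Definition C1_norm_lt (I : R -> Prop) (u u' : R -> R) (d : R) : Prop :=
  exists M, M < d /\ forall x, I x -> Rabs (u x) + Rabs (u' x) <= M.

(* Main.v *)
Require Import Defs.
From Stdlib Require Import Reals Lra Lia.
Open Scope R_scope.

Lemma lip_aux (I : R -> Prop) (g g' : R -> R) (M : R) :
  is_open_interval I ->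
  (forall x, I x -> derivable_pt_lim g x (g' x)) ->
  (forall x, I x -> Rabs (g' x) <= M) ->
  forall x y, I x -> I y -> x < y -> Rabs (g y - g x) <= M * Rabs (y - x).
Proof.
  intros [Hc _] Hd Hb x y Ix Iy Hxy.
  destruct (MVT_cor2 g g' x y Hxy) as [c [Hc1 Hc2]].
  { intros c Hc'. apply Hd. apply (Hc x c y); try assumption; lra. }
  rewrite Hc1, Rabs_mult. apply Rmult_le_compat_r. apply Rabs_pos.
  apply Hb. apply (Hc x c y); try assumption; lra.
Qed.

Lemma lip (I : R -> Prop) (g g' : R -> R) (M : R) :
  is_open_interval I ->
  (forall x, I x -> derivable_pt_lim g x (g' x)) ->
  (forall x, I x -> Rabs (g' x) <= M) ->
  forall x y, I x -> I y -> Rabs (g y - g x) <= M * Rabs (y - x).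
Proof.
  intros HI Hd Hb x y Ix Iy.
  destruct (Rtotal_order x y) as [H|[H|H]].
  - eapply lip_aux; eauto.
  - subst. replace (g y - g y) with 0 by ring. replace (y - y) with 0 by ring.
    rewrite Rabs_R0, Rmult_0_r. lra.
  - rewrite Rabs_minus_sym, (Rabs_minus_sym y x). eapply lip_aux; eauto.
Qed.

Lemma find_k (lam p a : R) :
  p > 0 -> a <= p -> forall N, (1 <= N)%nat -> lam ^ N * p < a ->
  exists k, (1 <= k)%nat /\ lam ^ k * p < a /\ a <= lam ^ (k - 1) * p.
Proof.
  intros Hp Ha N. induction N as [|m IH]; intros H1 H2. lia.
  destruct (Nat.eq_dec m 0) as [->|Hm].
  - exists 1%nat. simpl. split; [lia|]. split; [exact H2|lra].
  - destruct (Rlt_dec (lam ^ m * p) a) as [Hl|Hl].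
    + apply IH; [lia|exact Hl].
    + exists (S m). split; [lia|]. split; [exact H2|]. replace (S m - 1)%nat with m by lia. lra.
Qed.

Theorem lemma3p12 :
  forall (lam : R), 0 < lam < 1 ->
  forall (I1 : R -> Prop), is_open_interval I1 ->
  (forall x, -1 <= x <= 1 -> I1 x) ->
  forall (n : nat), (1 <= n)%nat ->
  exists delta : R, 0 < delta /\ (INR n + 1) * delta < 1 - lam /\
    forall h h' : R -> R,
      C1_on I1 h h' ->
      C1_norm_lt I1 (fun x => h x - x) (fun x => h' x - 1) delta ->
      h 0 > 0 ->
      exists k : nat, (1 <= k)%nat /\
        (INR n + 1) * Rabs (h (lam ^ k) - lam ^ k) > lam ^ k * (1 - lam) /\
        INR n * Rabs (h (lam ^ k) - lam ^ k) < lam ^ (k - 1) * (1 - lam) /\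
        forall y, I1 y -> Rabs (y - lam ^ k) < lam ^ (k - 1) * (1 - lam) ->
          Rabs ((h y - y) - (h (lam ^ k) - lam ^ k))
            < / 4 * Rabs (h (lam ^ k) - lam ^ k).
Proof.
  intros lam Hlam I1 HI H01 n Hn.
  set (N := INR n). set (c := 1 - lam).
  assert (HN : 1 <= N) by (apply (le_INR 1 n) in Hn; exact Hn).
  assert (Hc : 0 < c) by (unfold c; lra).
  assert (HD : 0 < 4 * N * (N + 1)) by nra.
  exists (lam * c / (4 * N * (N + 1))).
  assert (Hd : 0 < lam * c / (4 * N * (N + 1))).
  { apply Rdiv_lt_0_compat; nra. }
  assert (Hdd : lam * c / (4 * N * (N + 1)) * (4 * N * (N + 1)) = lam * c).
  { field. lra. }
  split; [exact Hd|]. split.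
  { assert (lam * c / (4 * N * (N + 1)) * (N+1) * (4*N) = lam * c) by (field; lra).
    nra. }
  intros h h' [Hder _] [M [HMd HMb]] Hh0.
  set (g := fun x => h x - x).
  assert (Hgd : forall x, I1 x -> derivable_pt_lim g x (h' x - 1)).
  { intros x Ix. apply (derivable_pt_lim_minus h id x). apply Hder; auto.
    apply derivable_pt_lim_id. }
  assert (Hgb : forall x, I1 x -> Rabs (h' x - 1) <= M).
  { intros x Ix. specialize (HMb x Ix). pose proof (Rabs_pos (h x - x)). lra. }
  assert (HL := lip I1 g (fun x => h' x - 1) M HI Hgd Hgb).
  set (a := g 0).
  assert (Ha : 0 < a) by (unfold a, g; lra).
  assert (HaM : a <= M).
  { assert (I1 0) by (apply H01; lra). specialize (HMb 0 H).
    pose proof (Rabs_pos (h' 0 - 1)). unfold a, g.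
    assert (Rabs (h 0 - 0) = h 0 - 0) by (apply Rabs_right; lra). lra. }
  assert (HM4 : M * (4 * N * (N + 1)) < lam * c).
  { rewrite <- Hdd. apply Rmult_lt_compat_r; lra. }
  set (Q := c / (N + 1)).
  assert (HQ : Q * (N + 1) = c) by (unfold Q; field; lra).
  assert (HQp : 0 < Q) by (unfold Q; apply Rdiv_lt_0_compat; lra).
  set (p := M + Q).
  assert (Hp : p > 0) by (unfold p; lra).
  destruct (pow_lt_1_zero lam ltac:(rewrite Rabs_right; lra) (a / p)
              ltac:(apply Rdiv_lt_0_compat; lra)) as [N0 HN0].
  assert (HN1 : lam ^ (S N0) * p < a).
  { specialize (HN0 (S N0) ltac:(lia)). rewrite Rabs_right in HN0.
    2:{ apply Rle_ge, pow_le; lra. }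
    apply (Rmult_lt_compat_r p) in HN0; [|lra].
    replace (a / p * p) with a in HN0 by (field; lra). exact HN0. }
  destruct (find_k lam p a Hp ltac:(unfold p; lra) (S N0) ltac:(lia) HN1)
    as [k [Hk1 [Hk2 Hk3]]].
  exists k. split; [exact Hk1|].
  set (s := lam ^ (k - 1)). set (t := lam ^ k).
  assert (Hts : t = lam * s).
  { unfold t, s. replace k with (S (k - 1)) at 1 by lia. reflexivity. }
  assert (Hs : 0 < s) by (unfold s; apply pow_lt; lra).
  assert (Hs1 : s <= 1) by (unfold s; rewrite <- (pow1 (k-1)); apply pow_incr; lra).
  assert (It : I1 t) by (apply H01; nra).
  assert (Hgt := HL 0 t ltac:(apply H01; lra) It).
  rewrite Rminus_0_r, (Rabs_right t) in Hgt by nra.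
  fold a in Hgt.
  assert (Hgt2 : -(M*t) <= g t - a <= M*t) by (pose proof (Rle_abs (-(g t - a))); pose proof (Rle_abs (g t - a)); rewrite Rabs_Ropp in *; lra). clear Hgt. rename Hgt2 into Hgt.
  assert (Hp' : t * p < a) by exact Hk2.
  assert (Hgtp : g t > t * Q).
  { unfold p in Hp'. lra. }
  assert (Habs : Rabs (g t) = g t).
  { apply Rabs_right. nra. }
  unfold g in Habs. rewrite Habs. fold (g t).
  assert (HMN : N * M * (1 + lam) < Q).
  { assert (N * M * (N+1) * 4 < lam * c) by nra.
    assert (HX : 0 <= N * M * (N+1)) by (apply Rmult_le_pos; [apply Rmult_le_pos|]; lra).
    assert (N * M * (N+1) * (1 + lam) <= N * M * (N+1) * 2) by (apply Rmult_le_compat_l; lra).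
    assert (N * M * (N+1) * (1 + lam) < c) by nra.
    rewrite <- HQ in H1. nra. }
  assert (HMl : M * (4 * (N + 1)) <= lam).
  { assert (M * (4*(N+1)) * N < lam * c) by nra.
    assert (0 <= M) by lra.
    assert (M * (4*(N+1)) <= M * (4*(N+1)) * N).
    { rewrite <- (Rmult_1_r (M * (4*(N+1)))) at 1. apply Rmult_le_compat_l; nra. }
    assert (lam * c <= lam) by (unfold c; nra). lra. }
  split.
  { fold t in Hgtp. nra. }
  split.
  {
    assert (g t <= a + M * t) by lra.
    assert (a <= s * p) by exact Hk3.
    assert (g t <= s * (M * (1 + lam) + Q)) by (unfold p in *; nra).
    assert (N * g t <= N * s * (M * (1 + lam) + Q)).
    { replace (N * s * (M * (1 + lam) + Q)) with (N * (s * (M * (1 + lam) + Q))) by ring.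
      apply Rmult_le_compat_l; lra. }
    assert (N * s * (M * (1 + lam) + Q) < s * c).
    { rewrite <- HQ. assert (N * M * (1 + lam) * s < Q * s) by nra. nra. }
    fold s. lra. }
  intros y Iy Hy.
  assert (Hgy := HL t y It Iy).
  change (h y - y - g t) with (g y - g t).
  assert (M * Rabs (y - t) <= M * (s * c)).
  { apply Rmult_le_compat_l; [lra|]. fold s in Hy. lra. }
  assert (M * (s * c) * (4 * (N + 1)) <= lam * s * c).
  { replace (M * (s * c) * (4 * (N + 1))) with ((M * (4 * (N+1))) * (s*c)) by ring.
    replace (lam * s * c) with (lam * (s * c)) by ring.
    apply Rmult_le_compat_r; [apply Rmult_le_pos|]; lra. }
  assert (t * Q * (4 * (N+1)) = 4 * (lam * s * c)) by (rewrite Hts, <- HQ; ring).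
  assert (M * (s * c) * 4 < g t) by nra.
  lra.
Qed.
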